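(* Let $M^2$ be a surface in $\mathbb{R}^4$ free of flat points. Then the tangent indicatrix $\chi$ is a rectangular hyperbola (a Lorentz circle) at each point if and only if the ellipse of normal curvature at each point is a line segment which is not collinear with the mean curvature vector field $H$.
   Context: Let $M^2: z=z(u,v)$ be a regular surface in $\mathbb{R}^4$ with first fundamental form $I=E\,du^2+2F\,du\,dv+G\,dv^2$, $W=\sqrt{EG-F^2}$, second fundamental form $\sigma$, and mean curvature vector $H=\frac12(\sigma(x,x)+\sigma(y,y))$ ($\{x,y\}$ any orthonormal tangent basis). Choose an orthonormal normal frame $\{e_1,e_2\}$ with $\{z_u,z_v,e_1,e_2\}$ positively oriented, write $\sigma(z_u,z_u)=c_{11}^1e_1+c_{11}^2e_2$, $\sigma(z_u,z_v)=c_{12}^1e_1+c_{12}^2e_2$, $\sigma(z_v,z_v)=c_{22}^1e_1+c_{22}^2e_2$, and set $L=\frac{2}{W}(c_{11}^1c_{12}^2-c_{12}^1c_{11}^2)$, $M=\frac{1}{W}(c_{11}^1c_{22}^2-c_{22}^1c_{11}^2)$, $N=\frac{2}{W}(c_{12}^1c_{22}^2-c_{22}^1c_{12}^2)$. A point is flat if $L=M=N=0$; ''free of flat points'' means $(L,M,N)\ne(0,0,0)$ everywhere. The principal normal curvatures $\nu',\nu''$ at a point are the roots of $(EG-F^2)\nu^2-(EN+GL-2FM)\nu+(LN-M^2)=0$, with corresponding $I$-orthogonal principal directions; the tangent indicatrix $\chi$ is the conic $\nu'X^2+\nu''Y^2=\varepsilon$ ($\varepsilon=\pm1$) in Cartesian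 coordinates of $T_pM^2$ w.r.t. an orthonormal basis of principal directions; it is a rectangular hyperbola iff $\nu''=-\nu'\neq0$. The ellipse of normal curvature at $p$ is $\{\sigma(v,v): v\in T_pM^2, |v|=1\}$, centered at $H(p)$; ''not collinear with $H$'' means the segment's direction is not parallel to $H(p)$. *)

(* Defs.v *)
From HB Require Import structures.
From mathcomp Require Import all_boot all_order all_algebra.
From mathcomp Require Import all_classical all_reals all_analysis.
Set Implicit Arguments. Unset Strict Implicit. Unset Printing Implicit Defensive.
Import Order.TTheory GRing.Theory Num.Theory.
Import numFieldNormedType.Exports.
Local Open Scope classical_set_scope.
Local Open Scope ring_scope.

Section Surf.
Variable R : realType.

Definition vec4 := 'rV[R]_4.

Definition dot (x y : vec4) : R := \sum_(j < 4) x ord0 j * y ord0 j.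

Definition param := R -> R -> vec4.

Definition pu (z : param) : param := fun u v => derive1 (fun t => z t v) u.
Definition pv (z : param) : param := fun u v => derive1 (fun t => z u t) v.

Definition iterd (w : seq bool) (z : param) : param :=
  foldr (fun b f => if b then pu f else pv f) z w.

(* z is C^infinity on the open set D: every iterated partial derivative is
   jointly continuous on D and partially derivable in u and in v. *)
Definition smooth_on (D : set (R * R)) (z : param) : Prop :=
  forall (w : seq bool) (p : R * R), D p ->
    [/\ (fun q : R * R => iterd w z q.1 q.2) @ p --> iterd w z p.1 p.2,
        derivable (fun t => iterd w z t p.2) p.1 1
      & derivable (fun t => iterd w z p.1 t) p.2 1].

Definition regular_at (z : param) (p : R * R) : Prop :=
  forall a b : R, a *: pu z p.1 p.2 + b *: pv z p.1 p.2 = 0 -> a = 0 /\ b = 0.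

Definition fE z (p : R * R) := dot (pu z p.1 p.2) (pu z p.1 p.2).
Definition fF z (p : R * R) := dot (pu z p.1 p.2) (pv z p.1 p.2).
Definition fG z (p : R * R) := dot (pv z p.1 p.2) (pv z p.1 p.2).
Definition fW z p := Num.sqrt (fE z p * fG z p - fF z p ^+ 2).

Definition zuu z (p : R * R) := pu (pu z) p.1 p.2.
Definition zuv z (p : R * R) := pv (pu z) p.1 p.2.
Definition zvv z (p : R * R) := pv (pv z) p.1 p.2.

Definition mat4 (a b c d : vec4) : 'M[R]_4 :=
  \matrix_(i < 4, j < 4) ([:: a; b; c; d]`_i) ord0 j.

Definition normal_frame_at (z : param) (e1 e2 : param) (p : R * R) : Prop :=
  let a := e1 p.1 p.2 in let b := e2 p.1 p.2 in
  [/\ dot a a = 1, dot b b = 1, dot a b = 0,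
      [/\ dot a (pu z p.1 p.2) = 0, dot a (pv z p.1 p.2) = 0,
          dot b (pu z p.1 p.2) = 0 & dot b (pv z p.1 p.2) = 0]
    & 0 < \det (mat4 (pu z p.1 p.2) (pv z p.1 p.2) a b)].

Section Frame.
Variables (z e1 e2 : param) (p : R * R).
Let E1 := e1 p.1 p.2.
Let E2 := e2 p.1 p.2.
(* coefficients of the second fundamental form:
   sigma(z_i,z_j) = normal part of z_ij = c_ij^1 e1 + c_ij^2 e2 *)
Definition c11 (k : bool) := dot (zuu z p) (if k then E1 else E2).
Definition c12 (k : bool) := dot (zuv z p) (if k then E1 else E2).
Definition c22 (k : bool) := dot (zvv z p) (if k then E1 else E2).
(* true = index 1, false = index 2 *)
Definition s11 : vec4 := c11 true *: E1 + c11 false *: E2.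
Definition s12 : vec4 := c12 true *: E1 + c12 false *: E2.
Definition s22 : vec4 := c22 true *: E1 + c22 false *: E2.

(* sigma(x,x) for the tangent vector x = a z_u + b z_v, x given as (a,b) *)
Definition sigma (x : R * R) : vec4 :=
  x.1 ^+ 2 *: s11 + (2 * x.1 * x.2) *: s12 + x.2 ^+ 2 *: s22.
Definition Iform (x y : R * R) : R :=
  fE z p * x.1 * y.1 + fF z p * (x.1 * y.2 + x.2 * y.1) + fG z p * x.2 * y.2.

Definition cL := 2 / fW z p * (c11 true * c12 false - c12 true * c11 false).
Definition cM := 1 / fW z p * (c11 true * c22 false - c22 true * c11 false).
Definition cN := 2 / fW z p * (c12 true * c22 false - c22 true * c12 false).

Definition flat_point : Prop := [/\ cL = 0, cM = 0 & cN = 0].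

Definition principal_normal_curvatures (nu1 nu2 : R) : Prop :=
  forall x : R,
    (fE z p * fG z p - fF z p ^+ 2) * x ^+ 2
    - (fE z p * cN + fG z p * cL - 2 * fF z p * cM) * x + (cL * cN - cM ^+ 2)
    = (fE z p * fG z p - fF z p ^+ 2) * (x - nu1) * (x - nu2).

(* the tangent indicatrix nu' X^2 + nu'' Y^2 = eps is a rectangular hyperbola *)
Definition indicatrix_rect_hyperbola : Prop :=
  exists nu1 nu2, principal_normal_curvatures nu1 nu2 /\ nu2 = - nu1 /\ nu1 != 0.

Definition normal_ellipse : set vec4 :=
  [set sigma x | x in [set x : R * R | Iform x x = 1]].

Definition mean_curvature_vector (h : vec4) : Prop :=
  exists x y : R * R, [/\ Iform x x = 1, Iform y y = 1, Iform x y = 0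
                     & h = 2^-1 *: (sigma x + sigma y)].

(* the ellipse of normal curvature is a (non-degenerate) line segment [A,B]
   whose direction B - A is not parallel to H *)
Definition ellipse_segment_not_collinear_H : Prop :=
  exists A B : vec4,
    [/\ A != B,
        normal_ellipse = [set (1 - t) *: A + t *: B | t in `[0, 1]%classic]
      & forall h, mean_curvature_vector h ->
          forall s t : R, s *: h + t *: (B - A) = 0 -> s = 0 /\ t = 0].
End Frame.
End Surf.

(* Main.v *)
Require Import Defs.
From HB Require Import structures.
From mathcomp Require Import all_boot all_order all_algebra.
From mathcomp Require Import all_classical all_reals all_analysis.
From mathcomp Require Import ring lra.
Import Order.TTheory GRing.Theory Num.Theory.
Import numFieldNormedType.Exports.
Local Open Scope classical_set_scope.
Local Open Scope ring_scope.
Set Implicit Arguments. Unset Strict Implicit.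

Section Alg.
Variable R : realType.
Implicit Types (a b d X Y : bool -> R).

Definition dt (x y : bool -> R) := x true * y false - x false * y true.

Lemma dt_span (x y X Y : bool -> R) l1 m1 l2 m2 :
  (forall k, x k = l1 * X k + m1 * Y k) ->
  (forall k, y k = l2 * X k + m2 * Y k) ->
  dt x y = (l1 * m2 - l2 * m1) * dt X Y.
Proof. by move=> hx hy; rewrite /dt !hx !hy; ring. Qed.

Definition Sk a b d (x : R * R) k :=
  x.1 ^+ 2 * a k + (2 * x.1 * x.2) * b k + x.2 ^+ 2 * d k.
Definition bil a b d (x y : R * R) k :=
  x.1 * y.1 * a k + (x.1 * y.2 + x.2 * y.1) * b k + x.2 * y.2 * d k.
Definition Xm (e F W : R) (cs : R * R) : R * R :=
  (cs.1 / e - cs.2 * F / (e * W), cs.2 * e / W).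
Definition Iq (E F G : R) (x y : R * R) :=
  E * x.1 * y.1 + F * (x.1 * y.2 + x.2 * y.1) + G * x.2 * y.2.

Variables (e F W : R) (a b d : bool -> R).
Hypothesis he : 0 < e.
Hypothesis hW : 0 < W.
Let E := e ^+ 2.
Let G := (W ^+ 2 + F ^+ 2) / e ^+ 2.

Definition P1 k := Sk a b d (Xm e F W (1, 0)) k.
Definition P2 k := Sk a b d (Xm e F W (0, 1)) k.
Definition P12 k := bil a b d (Xm e F W (1, 0)) (Xm e F W (0, 1)) k.

Lemma ne0 : e != 0. Proof. by rewrite gt_eqF. Qed.
Lemma nW0 : W != 0. Proof. by rewrite gt_eqF. Qed.

Lemma Sk_Xm c s k :
  Sk a b d (Xm e F W (c, s)) k = c ^+ 2 * P1 k + 2 * c * s * P12 k + s ^+ 2 * P2 k.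
Proof. rewrite /P1 /P2 /P12 /Sk /bil /Xm /=; ring. Qed.

Lemma Iq_Xm x y :
  Iq E F G (Xm e F W x) (Xm e F W y) = x.1 * y.1 + x.2 * y.2.
Proof.
rewrite /Iq /Xm /E /G /=; have := ne0; have := nW0; move=> h1 h2; field.
by rewrite h1 h2.
Qed.

Definition Xinv (x : R * R) : R * R := (e * x.1 + F * x.2 / e, x.2 * W / e).

Lemma Xm_inv x : Xm e F W (Xinv x) = x.
Proof.
case: x => x1 x2; rewrite /Xm /Xinv /=; have h1 := ne0; have h2 := nW0.
congr pair; field; by rewrite ?h1 ?h2.
Qed.

Lemma a_P k : a k = E * P1 k.
Proof. rewrite /P1 /Sk /Xm /E /=; have h1 := ne0; have h2 := nW0; field; by rewrite h1 h2. Qed.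
Lemma b_P k : b k = F * P1 k + W * P12 k.
Proof. rewrite /P1 /P12 /Sk /bil /Xm /=; have h1 := ne0; have h2 := nW0; field; by rewrite h1 h2. Qed.
Lemma d_P k : d k = (F ^+ 2 * P1 k + 2 * F * W * P12 k + W ^+ 2 * P2 k) / E.
Proof. rewrite /P1 /P2 /P12 /Sk /bil /Xm /E /=; have h1 := ne0; have h2 := nW0; field; by rewrite h1 h2. Qed.

Lemma T_P :
  E * (2 / W * dt b d) + G * (2 / W * dt a b) - 2 * F * (1 / W * dt a d)
  = 2 * W ^+ 2 * dt (fun k => P1 k - P2 k) P12.
Proof.
rewrite /dt /P1 /P2 /P12 /Sk /bil /Xm /E /G /=; have h1 := ne0; have h2 := nW0; field.
by rewrite h1 h2.
Qed.

End Alg.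


Section Alg2.
Variable R : realType.

Lemma sqr_eq0_sum (x y : R) : x ^+ 2 + y ^+ 2 = 0 -> x = 0 /\ y = 0.
Proof.
move=> h; have hx : x ^+ 2 = 0 by nra.
have hy : y ^+ 2 = 0 by nra.
by split; apply/eqP; rewrite -sqrf_eq0; apply/eqP.
Qed.

Lemma half_angle (U V : R) : U ^+ 2 + V ^+ 2 = 1 ->
  exists C S : R, [/\ C ^+ 2 + S ^+ 2 = 1, C ^+ 2 - S ^+ 2 = U & 2 * C * S = V].
Proof.
move=> h.
have [hU|hU] := eqVneq (1 + U) 0.
  have hV : V = 0.
    have : V ^+ 2 = 0 by nra.
    by move/eqP; rewrite sqrf_eq0 => /eqP.
  exists 0, 1; split; rewrite ?hV; lra.
have hU1 : U ^+ 2 <= 1 by nra.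
have hge : -1 <= U by nra.
have hp : 0 < 1 + U by rewrite lt_neqAle eq_sym hU /=; lra.
set m := Num.sqrt (2 * (1 + U)).
have hm2 : m ^+ 2 = 2 * (1 + U) by rewrite /m sqr_sqrtr //; lra.
have hm : m != 0 by apply/eqP => hm0; move: hm2; rewrite hm0; lra.
have sq : forall x, (x / m) ^+ 2 = x ^+ 2 / (2 * (1 + U)).
  by move=> x; rewrite -hm2; field.
have hV2 : V ^+ 2 = 1 - U ^+ 2 by lra.
have hp' : 2 * (1 + U) != 0 by rewrite mulf_eq0 negb_or hU andbT.
exists ((1 + U) / m), (V / m); split.
- rewrite !sq hV2; field; lra.
- rewrite !sq hV2; field; lra.
- have -> : 2 * ((1 + U) / m) * (V / m) = 2 * (1 + U) * V / m ^+ 2 by field.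
  rewrite hm2; field; lra.
Qed.

Lemma dir_exists (D Q : bool -> R) : D true * Q false - D false * Q true = 0 ->
  ~ (D true = 0 /\ D false = 0 /\ Q true = 0 /\ Q false = 0) ->
  exists U V, U ^+ 2 + V ^+ 2 = 1 /\ forall k, - V * D k + U * Q k = 0.
Proof.
move=> hdt hn.
suff [u [v [huv hk]]] : exists u v : R, u ^+ 2 + v ^+ 2 != 0 /\
    forall k, - v * D k + u * Q k = 0.
  have hpos : 0 < u ^+ 2 + v ^+ 2 by rewrite lt_neqAle eq_sym huv /=; nra.
  set n := Num.sqrt (u ^+ 2 + v ^+ 2).
  have hn2 : n ^+ 2 = u ^+ 2 + v ^+ 2 by rewrite /n sqr_sqrtr //; lra.
  have hn0 : n != 0 by apply/eqP => h0; move: hn2; rewrite h0; lra.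
  exists (u / n), (v / n); split.
    by rewrite !expr_div_n -mulrDl -hn2 divff // sqrf_eq0.
  move=> k; have := hk k => hk'.
  have -> : - (v / n) * D k + u / n * Q k = (- v * D k + u * Q k) / n by field.
  by rewrite hk' mul0r.
have [h1|h1] := eqVneq (D true ^+ 2 + Q true ^+ 2) 0.
  exists (D false), (Q false); split.
    apply/eqP => h2; apply: hn.
    have [? ?] := sqr_eq0_sum h1; have [? ?] := sqr_eq0_sum h2; by [].
  have [? ?] := sqr_eq0_sum h1.
  by case; lra.
exists (D true), (Q true); split => //.
by case; lra.
Qed.

Lemma ortho2 (c1 s1 c2 s2 : R) :
  c1 ^+ 2 + s1 ^+ 2 = 1 -> c2 ^+ 2 + s2 ^+ 2 = 1 -> c1 * c2 + s1 * s2 = 0 ->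
  [/\ c1 ^+ 2 + c2 ^+ 2 = 1, s1 ^+ 2 + s2 ^+ 2 = 1 & c1 * s1 + c2 * s2 = 0].
Proof.
move=> h1 h2 h3.
set dd := c1 * s2 - s1 * c2.
have hd : dd ^+ 2 = 1.
  have -> : dd ^+ 2 = (c1 ^+ 2 + s1 ^+ 2) * (c2 ^+ 2 + s2 ^+ 2) - (c1 * c2 + s1 * s2) ^+ 2
    by rewrite /dd; ring.
  by rewrite h1 h2 h3; ring.
have hsum : (c2 + dd * s1) ^+ 2 + (s2 - dd * c1) ^+ 2 = 0.
  have -> : (c2 + dd * s1) ^+ 2 + (s2 - dd * c1) ^+ 2 =
     (c2 ^+ 2 + s2 ^+ 2) + (s1 ^+ 2 + c1 ^+ 2) * dd ^+ 2 - 2 * dd ^+ 2 by rewrite /dd; ring.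
  rewrite h2 (addrC (s1 ^+ 2)) h1 hd; ring.
have [ha hb] := sqr_eq0_sum hsum.
have hc2 : c2 = - dd * s1 by lra.
have hs2 : s2 = dd * c1 by lra.
rewrite hc2 hs2; split.
- have -> : c1 ^+ 2 + (- dd * s1) ^+ 2 = c1 ^+ 2 + dd ^+ 2 * s1 ^+ 2 by ring.
  by rewrite hd mul1r.
- have -> : s1 ^+ 2 + (dd * c1) ^+ 2 = s1 ^+ 2 + dd ^+ 2 * c1 ^+ 2 by ring.
  by rewrite hd mul1r addrC.
- have -> : c1 * s1 + - dd * s1 * (dd * c1) = c1 * s1 * (1 - dd ^+ 2) by ring.
  by rewrite hd subrr mulr0.
Qed.

Lemma Pd_neg (E F G L M N : R) : 0 < E -> 0 < E * G - F ^+ 2 ->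
  E * N + G * L - 2 * F * M = 0 -> ~ (L = 0 /\ M = 0 /\ N = 0) ->
  L * N - M ^+ 2 < 0.
Proof.
move=> hE hD hT hn.
have hN : E * N = 2 * F * M - G * L by lra.
have key : E ^+ 2 * (L * N - M ^+ 2) = - (E * M - F * L) ^+ 2 - (E * G - F ^+ 2) * L ^+ 2.
  have -> : E ^+ 2 * (L * N - M ^+ 2) = E * L * (E * N) - E ^+ 2 * M ^+ 2 by ring.
  rewrite hN; ring.
rewrite ltNge; apply/negP => hP.
have h0 : 0 <= E ^+ 2 * (L * N - M ^+ 2) by apply: mulr_ge0 => //; apply: sqr_ge0.
have hL2 : (E * G - F ^+ 2) * L ^+ 2 = 0.
  have := sqr_ge0 (E * M - F * L); have : 0 <= (E * G - F ^+ 2) * L ^+ 2.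
    by apply: mulr_ge0; [lra | apply: sqr_ge0].
  lra.
have hL : L = 0.
  move/eqP: hL2; rewrite mulf_eq0 gt_eqF //= sqrf_eq0; by move/eqP.
have hM2 : (E * M - F * L) ^+ 2 = 0.
  move: key; rewrite hL; have := sqr_ge0 (E * M - F * 0).
  move: h0; rewrite hL; lra.
have hM : M = 0.
  move/eqP: hM2; rewrite sqrf_eq0 hL mulr0 subr0 mulf_eq0 gt_eqF //=; by move/eqP.
apply: hn; split => //; split => //.
move: hN; rewrite hL hM !mulr0 subr0 => /eqP; rewrite mulf_eq0 gt_eqF //=; by move/eqP.
Qed.

End Alg2.


Section Alg3.
Variable R : realType.
Variables (e F W : R) (a b d : bool -> R).
Hypothesis he : 0 < e.
Hypothesis hW : 0 < W.
Hypothesis hnf : ~ (dt a b = 0 /\ dt a d = 0 /\ dt b d = 0).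

Local Notation P1 := (P1 e F W a b d).
Local Notation P2 := (P2 e F W a b d).
Local Notation P12 := (P12 e F W a b d).

Lemma flat_of_span (X Y : bool -> R) al1 ga1 al2 ga2 al12 ga12 :
  dt X Y = 0 ->
  (forall k, P1 k = al1 * X k + ga1 * Y k) ->
  (forall k, P2 k = al2 * X k + ga2 * Y k) ->
  (forall k, P12 k = al12 * X k + ga12 * Y k) -> False.
Proof.
move=> h0 h1 h2 h12; apply: hnf.
have ha k : a k = (e ^+ 2 * al1) * X k + (e ^+ 2 * ga1) * Y k.
  by rewrite (a_P F a b d he hW k) h1; ring.
have hb k : b k = (F * al1 + W * al12) * X k + (F * ga1 + W * ga12) * Y k.
  by rewrite (b_P F a b d he hW k) h1 h12; ring.
have hd k : d k = ((F ^+ 2 * al1 + 2 * F * W * al12 + W ^+ 2 * al2) / e ^+ 2) * X k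
      + ((F ^+ 2 * ga1 + 2 * F * W * ga12 + W ^+ 2 * ga2) / e ^+ 2) * Y k.
  by rewrite (d_P F a b d he hW k) h1 h2 h12; ring.
by rewrite (dt_span ha hb) (dt_span ha hd) (dt_span hb hd) h0 !mulr0.
Qed.

Lemma flat_of_zero : (forall k, P1 k - P2 k = 0) -> (forall k, P12 k = 0) -> False.
Proof.
move=> hD hQ.
apply: (@flat_of_span P1 (fun _ => 0) 1 0 1 0 0 0).
- by rewrite /dt; ring.
- by move=> k; ring.
- by move=> k; have := hD k; lra.
- by move=> k; rewrite hQ; ring.
Qed.

Lemma forward :
  dt (fun k => P1 k - P2 k) P12 = 0 ->
  exists Av Bv : bool -> R,
  [/\ ~ (forall k, Av k = Bv k),
      (forall c s, c ^+ 2 + s ^+ 2 = 1 -> exists t, 0 <= t <= 1 /\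
         forall k, Sk a b d (Xm e F W (c, s)) k = (1 - t) * Av k + t * Bv k),
      (forall t, 0 <= t <= 1 -> exists c s, c ^+ 2 + s ^+ 2 = 1 /\
         forall k, Sk a b d (Xm e F W (c, s)) k = (1 - t) * Av k + t * Bv k)
    & (forall s t, (forall k, s * ((P1 k + P2 k) / 2) + t * (Bv k - Av k) = 0) ->
         s = 0 /\ t = 0)].
Proof.
move=> hT.
set D1 := fun k => P1 k - P2 k.
set Q := fun k => 2 * P12 k.
have hdq : D1 true * Q false - D1 false * Q true = 0.
  by rewrite -(mulr0 2) -hT /dt /D1 /Q; ring.
have hnz : ~ (D1 true = 0 /\ D1 false = 0 /\ Q true = 0 /\ Q false = 0).
  case=> [h1 [h2 [h3 h4]]]; apply: flat_of_zero.
  - by case.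
  - by case; [move: h3 | move: h4]; rewrite /Q => /eqP; rewrite mulf_eq0 pnatr_eq0 /= => /eqP.
have [U [V [hUV hk]]] := dir_exists hdq hnz.
have [C [S [hCS hU hV]]] := half_angle hUV.
pose Bv k := C ^+ 2 * P1 k + 2 * C * S * P12 k + S ^+ 2 * P2 k.
pose Av k := S ^+ 2 * P1 k - 2 * C * S * P12 k + C ^+ 2 * P2 k.
have cross0 k : - (C * S) * P1 k + (C ^+ 2 - S ^+ 2) * P12 k + C * S * P2 k = 0.
  have h := hk k.
  have -> : - (C * S) * P1 k + (C ^+ 2 - S ^+ 2) * P12 k + C * S * P2 k =
     (- (2 * C * S) * D1 k + (C ^+ 2 - S ^+ 2) * Q k) / 2 by rewrite /D1 /Q; field.
  by rewrite hU hV h mul0r.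
have hdel k : Bv k - Av k = U * D1 k + V * Q k.
  by rewrite -hU -hV /Bv /Av /D1 /Q; ring.
have hD1 k : D1 k = U * (Bv k - Av k) - V * (- V * D1 k + U * Q k).
  rewrite hdel; have -> : U * (U * D1 k + V * Q k) - V * (- V * D1 k + U * Q k)
     = (U ^+ 2 + V ^+ 2) * D1 k by ring.
  by rewrite hUV mul1r.
have hQ k : Q k = V * (Bv k - Av k) + U * (- V * D1 k + U * Q k).
  rewrite hdel; have -> : V * (U * D1 k + V * Q k) + U * (- V * D1 k + U * Q k)
     = (U ^+ 2 + V ^+ 2) * Q k by ring.
  by rewrite hUV mul1r.
have quad c s k : (C ^+ 2 + S ^+ 2) ^+ 2 * Sk a b d (Xm e F W (c, s)) k =
   (c * C + s * S) ^+ 2 * Bv k + (- c * S + s * C) ^+ 2 * Av k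
   + 2 * (c * C + s * S) * (- c * S + s * C) *
     (- (C * S) * P1 k + (C ^+ 2 - S ^+ 2) * P12 k + C * S * P2 k).
  by rewrite Sk_Xm /Bv /Av; ring.
exists Av, Bv; split.
- move=> hAB; apply: flat_of_zero => k.
    by move: (hD1 k); rewrite (hk k) hAB !subrr !mulr0 subrr.
  move: (hQ k); rewrite (hk k) hAB !subrr !mulr0 addr0 /Q => /eqP.
  by rewrite mulf_eq0 pnatr_eq0 /= => /eqP.
- move=> c s hcs; exists ((c * C + s * S) ^+ 2).
  have hsum : (c * C + s * S) ^+ 2 + (- c * S + s * C) ^+ 2 = 1.
    have -> : (c * C + s * S) ^+ 2 + (- c * S + s * C) ^+ 2
       = (c ^+ 2 + s ^+ 2) * (C ^+ 2 + S ^+ 2) by ring.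
    by rewrite hcs hCS mulr1.
  split.
    apply/andP; split; first exact: sqr_ge0.
    have := sqr_ge0 (- c * S + s * C); lra.
  move=> k; have := quad c s k; rewrite hCS expr1n mul1r cross0 mulr0 addr0 => ->.
  have -> : (- c * S + s * C) ^+ 2 = 1 - (c * C + s * S) ^+ 2 by lra.
  ring.
- move=> t /andP [ht0 ht1].
  set al := Num.sqrt t; set ga := Num.sqrt (1 - t).
  have hal : al ^+ 2 = t by rewrite sqr_sqrtr.
  have hga : ga ^+ 2 = 1 - t by rewrite sqr_sqrtr // subr_ge0.
  exists (al * C - ga * S), (al * S + ga * C); split.
    have -> : (al * C - ga * S) ^+ 2 + (al * S + ga * C) ^+ 2
       = (al ^+ 2 + ga ^+ 2) * (C ^+ 2 + S ^+ 2) by ring.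
    by rewrite hCS hal hga mulr1 subrKC.
  move=> k.
  have -> : Sk a b d (Xm e F W (al * C - ga * S, al * S + ga * C)) k =
     al ^+ 2 * Bv k + ga ^+ 2 * Av k + 2 * al * ga *
     (- (C * S) * P1 k + (C ^+ 2 - S ^+ 2) * P12 k + C * S * P2 k).
    by rewrite Sk_Xm /Bv /Av; ring.
  by rewrite cross0 mulr0 addr0 hal hga; ring.
- move=> s t hst.
  set Hv := fun k => (P1 k + P2 k) / 2.
  set del := fun k => Bv k - Av k.
  have [hd0|hd0] := eqVneq (dt Hv del) 0.
    exfalso.
    apply: (@flat_of_span Hv del 1 (U / 2) 1 (- (U / 2)) 0 (V / 2)) => //.
    + move=> k; have h := hD1 k; rewrite (hk k) mulr0 subr0 in h.
      have -> : P1 k = Hv k + D1 k / 2 by rewrite /Hv /D1; field.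
      by rewrite h /del; field.
    + move=> k; have h := hD1 k; rewrite (hk k) mulr0 subr0 in h.
      have -> : P2 k = Hv k - D1 k / 2 by rewrite /Hv /D1; field.
      by rewrite h /del; field.
    + move=> k; have h := hQ k; rewrite (hk k) mulr0 addr0 in h.
      have -> : P12 k = Q k / 2 by rewrite /Q; field.
      by rewrite h /del; field.
  have h1 := hst true; have h2 := hst false.
  have hs : s * dt Hv del = 0.
    have -> : s * dt Hv del = (s * Hv true + t * del true) * del false
      - (s * Hv false + t * del false) * del true by rewrite /dt; ring.
    by rewrite /Hv /del h1 h2; ring.
  have ht : t * dt Hv del = 0.
    have -> : t * dt Hv del = - (s * Hv true + t * del true) * Hv false
      + (s * Hv false + t * del false) * Hv true by rewrite /dt; ring.
    by rewrite /Hv /del h1 h2; ring.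
  move/eqP: hs; rewrite mulf_eq0 (negbTE hd0) orbF => /eqP ->.
  move/eqP: ht; rewrite mulf_eq0 (negbTE hd0) orbF => /eqP ->.
  by [].
Qed.

Lemma mean_P c1 s1 c2 s2 k :
  c1 ^+ 2 + s1 ^+ 2 = 1 -> c2 ^+ 2 + s2 ^+ 2 = 1 -> c1 * c2 + s1 * s2 = 0 ->
  (Sk a b d (Xm e F W (c1, s1)) k + Sk a b d (Xm e F W (c2, s2)) k) / 2
  = (P1 k + P2 k) / 2.
Proof.
move=> h1 h2 h3; have [k1 k2 k3] := ortho2 h1 h2 h3.
rewrite !Sk_Xm.
have -> : c1 ^+ 2 * P1 k + 2 * c1 * s1 * P12 k + s1 ^+ 2 * P2 k +
  (c2 ^+ 2 * P1 k + 2 * c2 * s2 * P12 k + s2 ^+ 2 * P2 k) =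
  (c1 ^+ 2 + c2 ^+ 2) * P1 k + 2 * (c1 * s1 + c2 * s2) * P12 k
  + (s1 ^+ 2 + s2 ^+ 2) * P2 k by ring.
by rewrite k1 k2 k3; congr (_ / _); ring.
Qed.

Lemma reverse (al be : bool -> R) t1 t2 t3 t4 :
  (forall k, Sk a b d (Xm e F W (1, 0)) k = (1 - t1) * al k + t1 * be k) ->
  (forall k, Sk a b d (Xm e F W (0, 1)) k = (1 - t2) * al k + t2 * be k) ->
  (forall k, Sk a b d (Xm e F W (3/5, 4/5)) k = (1 - t3) * al k + t3 * be k) ->
  (forall k, Sk a b d (Xm e F W (3/5, - (4/5))) k = (1 - t4) * al k + t4 * be k) ->
  dt (fun k => P1 k - P2 k) P12 = 0.
Proof.
move=> h1 h2 h3 h4.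
have hx k : P1 k - P2 k = (t1 - t2) * (be k - al k) + 0 * 0.
  have := h1 k; have := h2 k; rewrite !Sk_Xm => e2 e1; lra.
have hy k : P12 k = ((25 / 48) * (t3 - t4)) * (be k - al k) + 0 * 0.
  have := h3 k; have := h4 k; rewrite !Sk_Xm => e4 e3.
  have : (48 / 25) * P12 k = (t3 - t4) * (be k - al k).
    have -> : (48 / 25) * P12 k =
      ((3/5) ^+ 2 * P1 k + 2 * (3/5) * (4/5) * P12 k + (4/5) ^+ 2 * P2 k)
      - ((3/5) ^+ 2 * P1 k + 2 * (3/5) * (- (4/5)) * P12 k + (- (4/5)) ^+ 2 * P2 k).
      by field.
    by rewrite e3 e4; ring.
  move=> h; have -> : P12 k = (25 / 48) * ((48 / 25) * P12 k) by field.
  by rewrite h; ring.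
by rewrite (dt_span hx hy) /dt; ring.
Qed.

End Alg3.


Section Dot.
Variable R : realType.
Implicit Types x y w : vec4 R.
Lemma dotDl x y w : dot (x + y) w = dot x w + dot y w.
Proof. rewrite /dot !big_ord_recr !big_ord0 /= !mxE; ring. Qed.
Lemma dotZl (c : R) x w : dot (c *: x) w = c * dot x w.
Proof. rewrite /dot !big_ord_recr !big_ord0 /= !mxE; ring. Qed.
Lemma dotNl x w : dot (- x) w = - dot x w.
Proof. rewrite /dot !big_ord_recr !big_ord0 /= !mxE; ring. Qed.
Lemma dot0l w : dot 0 w = 0.
Proof. rewrite /dot !big_ord_recr !big_ord0 /= !mxE; ring. Qed.
Lemma dotC x w : dot x w = dot w x.
Proof. rewrite /dot !big_ord_recr !big_ord0 /=; ring. Qed.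
Lemma dot_ge0 x : 0 <= dot x x.
Proof. rewrite /dot !big_ord_recr !big_ord0 /=; nra. Qed.
Lemma comb_lemma (A1 A2 : vec4 R) (a1 a2 b1 b2 d1 d2 x1 x2 : R) :
 x1^+2 *: (a1*:A1 + a2*:A2) + (2*x1*x2) *: (b1*:A1+b2*:A2) + x2^+2 *: (d1*:A1 + d2*:A2)
 = (x1^+2*a1 + 2*x1*x2*b1 + x2^+2*d1) *: A1 + (x1^+2*a2 + 2*x1*x2*b2 + x2^+2*d2) *: A2.
Proof. apply/rowP => j; rewrite !mxE; ring. Qed.
Lemma gen_dt (w x1 x2 y1 y2 : R) : w * (x1*y2 - y1*x2) = w * (x1*y2 - x2*y1).
Proof. by rewrite (mulrC y1). Qed.
Lemma div0_mul (c x : R) : c / 0 * x = 0.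
Proof. by rewrite invr0 mulr0 mul0r. Qed.

Lemma vec_comb (E1 E2 : vec4 R) (u al be : bool -> R) (t : R) :
  (forall k, u k = (1 - t) * al k + t * be k) ->
  (1 - t) *: (al true *: E1 + al false *: E2) + t *: (be true *: E1 + be false *: E2)
  = u true *: E1 + u false *: E2.
Proof. move=> h; apply/rowP => j; rewrite !mxE !h; ring. Qed.

Lemma T0_of (D T P n : R) :
  (forall r : R, D * r ^+ 2 - T * r + P = D * (r - n) * (r - - n)) -> T = 0.
Proof. move=> h; have h1 := h 1; have h2 := h (-1); nra. Qed.

Lemma hyp_of (D T P : R) : 0 < D -> T = 0 -> P < 0 ->
  exists n, (forall r : R, D * r ^+ 2 - T * r + P = D * (r - n) * (r - - n)) /\ n != 0.
Proof.
move=> hD hT hP.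
have hq : 0 < - P / D by apply: divr_gt0 => //; lra.
exists (Num.sqrt (- P / D)); split; last by rewrite gt_eqF // sqrtr_gt0.
move=> r; have hn := sqr_sqrtr (ltW hq).
have -> : D * (r - Num.sqrt (- P / D)) * (r - - Num.sqrt (- P / D))
   = D * r ^+ 2 - D * (Num.sqrt (- P / D)) ^+ 2 by ring.
rewrite hn hT; field; by rewrite gt_eqF.
Qed.

Lemma cancel2W (w x : R) : 0 < w -> 2 * w ^+ 2 * x = 0 -> x = 0.
Proof.
move=> hw h; have hp : 2 * w ^+ 2 != 0 by rewrite gt_eqF // mulr_gt0 // exprn_gt0.
by move/eqP: h; rewrite mulf_eq0 (negbTE hp) /= => /eqP.
Qed.

Lemma half_mul (s t x y : R) : s * (2^-1 * x) + t * y = s * (x / 2) + t * y.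
Proof. by rewrite (mulrC x). Qed.
End Dot.

Section Geo.
Variable R : realType.
Variables (z e1 e2 : param R) (p : R * R).
Hypothesis hfr : normal_frame_at z e1 e2 p.
Hypothesis hnf : ~ flat_point z e1 e2 p.

Local Notation E1 := (e1 p.1 p.2).
Local Notation E2 := (e2 p.1 p.2).
Local Notation a := (c11 z e1 e2 p).
Local Notation b := (c12 z e1 e2 p).
Local Notation d := (c22 z e1 e2 p).
Local Notation E := (fE z p).
Local Notation F := (fF z p).
Local Notation G := (fG z p).
Local Notation W := (fW z p).
Local Notation e := (Num.sqrt (fE z p)).

Definition co (v : vec4 R) (k : bool) := dot v (if k then E1 else E2).

Lemma hE1 : dot E1 E1 = 1. Proof. by case: hfr. Qed.
Lemma hE2 : dot E2 E2 = 1. Proof. by case: hfr. Qed.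
Lemma hE12 : dot E1 E2 = 0. Proof. by case: hfr. Qed.

Lemma co_span (x y : R) k : co (x *: E1 + y *: E2) k = if k then x else y.
Proof.
rewrite /co; case: k; rewrite dotDl !dotZl ?(dotC E2 E1) ?hE1 ?hE2 ?hE12 /=; ring.
Qed.

Lemma sigma_span x :
  sigma z e1 e2 p x = Sk a b d x true *: E1 + Sk a b d x false *: E2.
Proof. rewrite /sigma /s11 /s12 /s22 /Sk; exact: comb_lemma. Qed.

Lemma co_sigma x k : co (sigma z e1 e2 p x) k = Sk a b d x k.
Proof. by rewrite sigma_span co_span; case: k. Qed.

Lemma co_comb (s t : R) (A B : vec4 R) k : co (s *: A + t *: B) k = s * co A k + t * co B k.
Proof. by rewrite /co dotDl !dotZl. Qed.

Lemma cL_dt : cL z e1 e2 p = 2 / W * dt a b. Proof. rewrite /cL /dt; exact: gen_dt. Qed.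
Lemma cM_dt : cM z e1 e2 p = 1 / W * dt a d. Proof. rewrite /cM /dt; exact: gen_dt. Qed.
Lemma cN_dt : cN z e1 e2 p = 2 / W * dt b d. Proof. rewrite /cN /dt; exact: gen_dt. Qed.

Lemma W_gt0 : 0 < W.
Proof.
have hge : 0 <= W by apply: sqrtr_ge0.
rewrite lt_neqAle hge andbT; apply/negP => /eqP hW0.
apply: hnf; rewrite /flat_point cL_dt cM_dt cN_dt -hW0; split; exact: div0_mul.
Qed.

Lemma Delta_gt0 : 0 < E * G - F ^+ 2.
Proof. by have := W_gt0; rewrite /fW sqrtr_gt0. Qed.

Lemma W2 : W ^+ 2 = E * G - F ^+ 2.
Proof. by rewrite /fW sqr_sqrtr // ltW // Delta_gt0. Qed.

Lemma E_gt0 : 0 < E.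
Proof.
have h1 := Delta_gt0; have h2 : 0 <= E by apply: dot_ge0.
have h3 : 0 <= G by apply: dot_ge0.
rewrite lt_neqAle h2 andbT; apply/negP => /eqP h0; move: h1 h3; rewrite -h0.
generalize (fG z p) (fF z p) => g f; nra.
Qed.

Lemma e_gt0 : 0 < e. Proof. by rewrite sqrtr_gt0 E_gt0. Qed.
Lemma hEe : E = e ^+ 2. Proof. by rewrite sqr_sqrtr // ltW // E_gt0. Qed.
Lemma G_eq : G = (W ^+ 2 + F ^+ 2) / e ^+ 2.
Proof.
rewrite W2 -hEe; have := E_gt0.
generalize (fE z p) (fG z p) (fF z p) => E' G' F' h; field; by rewrite gt_eqF.
Qed.

Local Notation P1' := (P1 e F W a b d).
Local Notation P2' := (P2 e F W a b d).
Local Notation P12' := (P12 e F W a b d).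

Definition Tq := E * cN z e1 e2 p + G * cL z e1 e2 p - 2 * F * cM z e1 e2 p.

Lemma Tq_P : Tq = 2 * W ^+ 2 * dt (fun k => P1' k - P2' k) P12'.
Proof.
have := T_P F a b d e_gt0 W_gt0; rewrite -G_eq -hEe => <-.
by rewrite /Tq cN_dt cL_dt cM_dt.
Qed.


Lemma co_add (x y : vec4 R) k : co (x + y) k = co x k + co y k.
Proof. by rewrite /co dotDl. Qed.
Lemma co_scale (c : R) (x : vec4 R) k : co (c *: x) k = c * co x k.
Proof. by rewrite /co dotZl. Qed.
Lemma co_sub (x y : vec4 R) k : co (x - y) k = co x k - co y k.
Proof. by rewrite /co dotDl dotNl. Qed.
Lemma co_0 k : co 0 k = 0.
Proof. by rewrite /co dot0l. Qed.

Lemma Iform_Xm cs cs' : Iform z p (Xm e F W cs) (Xm e F W cs') = cs.1 * cs'.1 + cs.2 * cs'.2.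
Proof.
have := Iq_Xm F e_gt0 W_gt0 cs cs'; rewrite -G_eq -hEe => <-.
by rewrite /Iform /Iq.
Qed.

Lemma decomp x : exists c s, x = Xm e F W (c, s).
Proof.
have hx := Xm_inv F e_gt0 W_gt0 x.
move: hx; case: (Xinv e F W x) => c s hx; by exists c, s.
Qed.

Lemma hnf' : ~ (dt a b = 0 /\ dt a d = 0 /\ dt b d = 0).
Proof.
move=> [h1 [h2 h3]]; apply: hnf; rewrite /flat_point; split.
- by rewrite cL_dt h1; exact: mulr0.
- by rewrite cM_dt h2; exact: mulr0.
- by rewrite cN_dt h3; exact: mulr0.
Qed.

Lemma pointwise :
  indicatrix_rect_hyperbola z e1 e2 p <-> ellipse_segment_not_collinear_H z e1 e2 p.
Proof.
split.
- case=> nu1 [nu2 [hpr [hnu2 _]]].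
  rewrite /principal_normal_curvatures hnu2 in hpr.
  have hT : Tq = 0 := T0_of hpr.
  have hdt : dt (fun k => P1' k - P2' k) P12' = 0.
    by apply: (cancel2W W_gt0); rewrite -Tq_P.
  have [Av [Bv [hAB hsub hsup hnc]]] := forward e_gt0 W_gt0 hnf' hdt.
  exists (Av true *: E1 + Av false *: E2), (Bv true *: E1 + Bv false *: E2); split.
  + apply/eqP => hAB'; apply: hAB => k.
    by move: (congr1 (co ^~ k) hAB'); rewrite /= !co_span; case: k.
  + rewrite /normal_ellipse; apply/seteqP; split => w /=.
      case=> x hx <-; have [c [s hxe]] := decomp x.
      rewrite hxe /= Iform_Xm /= in hx.
      have [t [ht htk]] := hsub c s hx.
      exists t; first by rewrite /= in_itv /=.
      by rewrite hxe sigma_span; apply: vec_comb.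
    case=> t; rewrite /= in_itv /= => ht <-.
    have [c [s [hcs hk]]] := hsup t ht.
    exists (Xm e F W (c, s)); first by rewrite /= Iform_Xm.
    by rewrite sigma_span; symmetry; apply: vec_comb.
  + move=> h [x [y [hx hy hxy ->]]] s t hst.
    have [c1 [s1 hxe]] := decomp x; have [c2 [s2 hye]] := decomp y.
    rewrite hxe hye !Iform_Xm /= in hx hy hxy.
    apply: hnc => k.
    move: (congr1 (co ^~ k) hst); rewrite /= co_add !co_scale co_add co_sub !co_span co_0.
    rewrite hxe hye !co_sigma half_mul (mean_P e F W a b d k hx hy hxy).
    by case: k.
- case=> A [B [_ hset _]].
  have seg cs : cs.1 ^+ 2 + cs.2 ^+ 2 = 1 -> exists t,
      forall k, Sk a b d (Xm e F W cs) k = (1 - t) * co A k + t * co B k.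
    move=> hcs.
    have : normal_ellipse z e1 e2 p (sigma z e1 e2 p (Xm e F W cs)).
      by exists (Xm e F W cs) => //=; rewrite Iform_Xm -!expr2.
    rewrite hset => -[t _ hteq]; exists t => k.
    by rewrite -co_sigma -hteq co_add !co_scale.
  have [t1 h1] := seg (1, 0) ltac:(by rewrite /=; ring).
  have [t2 h2] := seg (0, 1) ltac:(by rewrite /=; ring).
  have [t3 h3] := seg (3/5, 4/5) ltac:(by rewrite /=; field).
  have [t4 h4] := seg (3/5, - (4/5)) ltac:(by rewrite /=; field).
  have hdt := reverse h1 h2 h3 h4.
  have hT : Tq = 0 by rewrite Tq_P hdt mulr0.
  have hP : cL z e1 e2 p * cN z e1 e2 p - cM z e1 e2 p ^+ 2 < 0.
    apply: (Pd_neg E_gt0 Delta_gt0 hT).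
    move=> [h1' [h2' h3']]; apply: hnf; split; [exact: h1' | exact: h2' | exact: h3'].
  have [n [hn hn0]] := hyp_of Delta_gt0 hT hP.
  exists n, (- n); split; first exact: hn.
  by split; [reflexivity | exact: hn0].
Qed.
End Geo.


Unset Implicit Arguments.
Theorem corollary3p6 (R : realType) (D : set (R * R)) (z e1 e2 : param R) :
  open D ->
  smooth_on D z ->
  (forall p, D p -> regular_at z p) ->
  (forall p, D p -> normal_frame_at z e1 e2 p) ->
  (forall p, D p -> ~ flat_point z e1 e2 p) ->
  ((forall p, D p -> indicatrix_rect_hyperbola z e1 e2 p) <->
   (forall p, D p -> ellipse_segment_not_collinear_H z e1 e2 p)).
Proof.
move=> _ _ _ hfr hnf; split => h q hq.
- exact: ((pointwise (hfr q hq) (hnf q hq)).1 (h q hq)).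
- exact: ((pointwise (hfr q hq) (hnf q hq)).2 (h q hq)).
Qed.
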